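(* Let $\mathcal{A}$ be the greedy algorithm. Then for every $\ell\in[n]$, $$\mathbb{E}[v(\mathcal{A}(U^{\le\ell}))]\ \ge\ \alpha_\ell\,\frac{\ell}{n}\,v(\mathrm{OPT}),\qquad \alpha_\ell=1-\frac{\ell}{en}-\frac{1}{ek}.$$
   Context: Let $U$ be a finite ground set of $n$ items and $k\ge1$ an integer. Let $v\colon 2^U\to\mathbb{R}_{\ge0}$ be monotone and submodular, and $\mathrm{OPT}\in\arg\max\{v(S): S\subseteq U, |S|\le k\}$. The items arrive one per round in a uniformly random order; $U^{\le \ell}$ denotes the set of items arriving in rounds $1,\dots,\ell$. The greedy algorithm, given $L\subseteq U$, starts from $\emptyset$ and repeatedly adds an item of $L$ with maximum marginal increase $v(S\cup\{x\})-v(S)$ (ties broken by a fixed rule depending only on the items) until $\min(k,|L|)$ items are chosen; $\mathcal{A}(L)$ denotes its output. *)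

(* Defs.v *)
From mathcomp Require Import all_boot all_fingroup.
From Stdlib Require Import Reals.
Set Implicit Arguments. Unset Strict Implicit. Unset Printing Implicit Defensive.

Definition nonneg_fun n (v : {set 'I_n} -> R) : Prop :=
  forall S, (0 <= v S)%R.

Definition monotone_fun n (v : {set 'I_n} -> R) : Prop :=
  forall A B : {set 'I_n}, A \subset B -> (v A <= v B)%R.

Definition submodular_fun n (v : {set 'I_n} -> R) : Prop :=
  forall A B : {set 'I_n}, (v (A :|: B) + v (A :&: B) <= v A + v B)%R.

Definition marginal n (v : {set 'I_n} -> R) (S : {set 'I_n}) (x : 'I_n) : R :=
  (v (x |: S) - v S)%R.

Definition better n (v : {set 'I_n} -> R) (rk : 'I_n -> nat) (S : {set 'I_n})
  (best y : 'I_n) : 'I_n :=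
  if Rlt_dec (marginal v S best) (marginal v S y) then y
  else if Req_EM_T (marginal v S best) (marginal v S y) then
         (if (rk y < rk best)%N then y else best)
       else best.

Definition greedy_pick n (v : {set 'I_n} -> R) (rk : 'I_n -> nat)
  (L S : {set 'I_n}) : option 'I_n :=
  match enum (L :\: S) with
  | [::] => None
  | x :: s => Some (foldl (better v rk S) x s)
  end.

Definition greedy_step n (v : {set 'I_n} -> R) (rk : 'I_n -> nat)
  (L S : {set 'I_n}) : {set 'I_n} :=
  match greedy_pick v rk L S with
  | None => S
  | Some x => x |: S
  end.

Definition greedy n (v : {set 'I_n} -> R) (rk : 'I_n -> nat) (k : nat)
  (L : {set 'I_n}) : {set 'I_n} :=
  iter (minn k #|L|) (greedy_step v rk L) set0.

(* Random arrival order: a uniformly random permutation pi; the item arriving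
   in round i+1 is pi i.  U^{<= l} = items arriving in rounds 1..l. *)
Definition prefix_set n (pi : {perm 'I_n}) (l : nat) : {set 'I_n} :=
  [set pi i | i : 'I_n & (i < l)%N].

Definition expect_perm n (f : {perm 'I_n} -> R) : R :=
  (\big[Rplus/0%R]_(pi : {perm 'I_n}) f pi / INR #|{perm 'I_n}|)%R.

(* Main.v *)
Require Import Defs.
From HB Require Import structures.
From mathcomp Require Import all_boot all_fingroup.
From Stdlib Require Import Reals Lra Lia.
From mathcomp Require Import zify.
Set Implicit Arguments. Unset Strict Implicit. Unset Printing Implicit Defensive.

Lemma Rplus_assoc' : associative Rplus. Proof. by move=> *; rewrite Rplus_assoc. Qed.
HB.instance Definition _ := Monoid.isComLaw.Build R 0%R Rplus Rplus_assoc' Rplus_comm Rplus_0_l.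

Section RS.
Variable I : finType.
Implicit Types F G : I -> R.

Lemma RS_le (P : pred I) F G : (forall i, P i -> F i <= G i)%R ->
  (\big[Rplus/0]_(i | P i) F i <= \big[Rplus/0]_(i | P i) G i)%R.
Proof. move=> H; apply: (big_ind2 (fun x y => x <= y)%R) => //; [lra| move=> *; lra]. Qed.

Lemma RS_add (P : pred I) F G :
  (\big[Rplus/0]_(i | P i) (F i + G i) = \big[Rplus/0]_(i | P i) F i + \big[Rplus/0]_(i | P i) G i)%R.
Proof. by rewrite big_split. Qed.

Lemma RS_scal (P : pred I) c F :
  (\big[Rplus/0]_(i | P i) (c * F i) = c * \big[Rplus/0]_(i | P i) F i)%R.
Proof.
apply: (big_ind2 (fun y x => y = c * x)%R) => //; first by lra.
by move=> x1 x2 y1 y2 -> ->; lra.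
Qed.

Lemma RS_INR (P : pred I) (f : I -> nat) :
  (\big[Rplus/0]_(i | P i) INR (f i) = INR (\sum_(i | P i) f i))%R.
Proof. by rewrite (big_morph INR plus_INR (erefl (INR 0))). Qed.
End RS.

Lemma exp_pow_nat a (m : nat) : (exp a ^ m = exp (INR m * a))%R.
Proof.
elim: m => [|m IH]; first by rewrite /= Rmult_0_l exp_0.
rewrite [LHS]/= IH -exp_plus S_INR; congr exp; lra.
Qed.

Lemma pow_bound (t k : nat) : (1 <= t)%N -> (1 <= k)%N ->
  ((1 - 1 / INR t) ^ k <= INR t / (exp 1 * INR k))%R.
Proof.
move=> ht hk.
have Ht : (1 <= INR t)%R by apply: (le_INR 1); apply/leP.
have Hk : (1 <= INR k)%R by apply: (le_INR 1); apply/leP.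
have He : (0 < exp 1)%R by apply: exp_pos.
have H1 : (0 <= 1 - 1/INR t)%R.
  have : (1 / INR t <= 1)%R by apply: Rmult_le_reg_r (_ : 0 < INR t)%R _; [lra| field_simplify; lra].
  lra.
apply: Rle_trans (_ : exp (- (1 / INR t)) ^ k <= _)%R.
  apply: pow_incr; split => //; have := exp_ineq1_le (- (1 / INR t)); lra.
rewrite exp_pow_nat.
set x := (INR k / INR t)%R.
have Hx : (0 < x)%R by rewrite /x; apply: Rdiv_lt_0_compat; lra.
have -> : (INR k * - (1 / INR t) = - x)%R by rewrite /x; field; lra.
rewrite exp_Ropp.
have Hex : (exp 1 * x <= exp x)%R.
  have h1 := exp_ineq1_le (x - 1).
  have -> : exp x = (exp 1 * exp (x - 1))%R by rewrite -exp_plus; congr exp; lra.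
  apply: Rmult_le_compat_l; lra.
have -> : (INR t / (exp 1 * INR k) = / (exp 1 * x))%R by rewrite /x; field; lra.
apply: Rinv_le_contravar => //; nra.
Qed.

Ltac rlra := repeat match goal with H : context[reverse_coercion] |- _ => unfold reverse_coercion in H end; try unfold reverse_coercion; lra.

Section Greedy.
Variables (n : nat) (v : {set 'I_n} -> R) (rk : 'I_n -> nat).
Hypotheses (vpos : nonneg_fun v) (vmon : monotone_fun v) (vsub : submodular_fun v).

Lemma better_spec S b y : let r := better v rk S b y in
  r \in [:: b; y] /\ (marginal v S b <= marginal v S r)%R /\ (marginal v S y <= marginal v S r)%R.
Proof.
rewrite /better; destruct (Rlt_dec (marginal v S b) (marginal v S y)) as [h|h] => /=.
  by rewrite !inE eqxx orbT; split => //; split; lra.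
destruct (Req_EM_T (marginal v S b) (marginal v S y)) as [h2|h2] => /=.
  case: ifP => _; rewrite !inE eqxx ?orbT; split => //; split; lra.
rewrite !inE eqxx; split => //; split; lra.
Qed.

Lemma foldl_spec S s b : let r := foldl (better v rk S) b s in
  r \in b :: s /\ forall y, y \in b :: s -> (marginal v S y <= marginal v S r)%R.
Proof.
elim: s b => [|x s IH] b /=.
  by split; [rewrite inE | move=> y; rewrite inE => /eqP ->; lra].
have [hm [h1 h2]] := better_spec S b x.
have [IH1 IH2] := IH (better v rk S b x).
split.
  move: IH1; rewrite !inE => /orP [/eqP ->|->]; last by rewrite !orbT.
  by move: hm; rewrite !inE => /orP [->|/eqP ->]; rewrite ?eqxx ?orbT.
move=> y; rewrite !inE => /orP [/eqP ->|/orP [/eqP ->|hy]].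
- apply: Rle_trans h1 _; apply: IH2; exact: mem_head.
- apply: Rle_trans h2 _; apply: IH2; exact: mem_head.
- by apply: IH2; rewrite inE hy orbT.
Qed.

Lemma pick_spec L S :
  match greedy_pick v rk L S with
  | None => L :\: S = set0
  | Some x => x \in L :\: S /\ forall y, y \in L :\: S -> (marginal v S y <= marginal v S x)%R
  end.
Proof.
rewrite /greedy_pick; case E: (enum (L :\: S)) => [|x0 s].
  by rewrite -[L :\: S]set_enum E; apply/setP => y; rewrite !inE.
have [h1 h2] := foldl_spec S s x0.
split; first by rewrite -mem_enum E.
by move=> y; rewrite -mem_enum E; apply: h2.
Qed.

Lemma marg_ge0 S x : (0 <= marginal v S x)%R.
Proof. rewrite /marginal; have := vmon (subsetUr [set x] S); lra. Qed.

Lemma sub_bound S (s : seq 'I_n) :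
  (v (S :|: [set y in s]) <= v S + \big[Rplus/0]_(y <- s) marginal v S y)%R.
Proof.
elim: s => [|x s IH].
  rewrite big_nil; have -> : S :|: [set y in [::]] = S by apply/setP => y; rewrite !inE orbF.
  lra.
rewrite big_cons.
have -> : S :|: [set y in x :: s] = (x |: S) :|: (S :|: [set y in s]).
  by apply/setP => y; rewrite !inE; case: (y == x); case: (y \in S).
have := vsub (x |: S) (S :|: [set y in s]).
set a := v (_ :&: _); set b := v (_ :|: (_ :|: _)); set c := v (_ :|: [set y in s]) => h.
have h2 : (v S <= a)%R.
  rewrite /a; apply: vmon; apply/subsetP => y hy; rewrite !inE hy; by rewrite orbT.
have hm : marginal v S x = (v (x |: S) - v S)%R by [].
rewrite hm; move: IH; rewrite -/c; lra.
Qed.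

Lemma seq_bound S (s : seq 'I_n) c :
  (forall y, y \in s -> marginal v S y <= c)%R ->
  (\big[Rplus/0]_(y <- s) marginal v S y <= INR (size s) * c)%R.
Proof.
elim: s => [|x s IH] H; first by rewrite big_nil /=; lra.
rewrite big_cons [size _]/= S_INR.
have := H x (mem_head _ _).
have h0 : forall y, y \in s -> (marginal v S y <= c)%R by move=> y hy; apply: H; rewrite inE hy orbT.
have := IH h0; lra.
Qed.

Lemma step_bound (L S T : {set 'I_n}) : T \subset L -> (0 < #|T|)%N ->
  (v S + (v T - v S) / INR #|T| <= v (greedy_step v rk L S))%R.
Proof.
move=> hTL ht.
have Ht : (1 <= INR #|T|)%R by apply: (le_INR 1); apply/leP.
rewrite /greedy_step; have := pick_spec L S; case: (greedy_pick v rk L S) => [x [hx hmax]|hN].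
  suff : (v T - v S <= INR #|T| * marginal v S x)%R.
    move=> h; rewrite /marginal in h *.
    have : ((v T - v S) / INR #|T| <= v (x |: S) - v S)%R.
      apply: (Rmult_le_reg_r (INR #|T|)); first lra.
      field_simplify; lra.
    lra.
  have h1 : (v T <= v (S :|: T))%R by apply: vmon; exact: subsetUr.
  have h2 := sub_bound S (enum T); rewrite set_enum in h2.
  have h3 := seq_bound (c := marginal v S x) (S := S) (s := enum T).
  rewrite -cardE in h3.
  suff h4 : forall y, y \in enum T -> (marginal v S y <= marginal v S x)%R.
    have h5 := h3 h4; move: h2 h5; set B := \big[_/_]_(y <- _) _ => h2 h5. rewrite /reverse_coercion in h1 h2 h5 *. lra.
  move=> y; rewrite mem_enum => hy.
  case hyS: (y \in S).
    have -> : marginal v S y = 0%R.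
      have e : y |: S = S by apply/setP => z; rewrite !inE; case: (z =P y) => // ->; rewrite hyS.
      by rewrite /marginal e; lra.
    exact: marg_ge0.
  by apply: hmax; rewrite !inE hyS (subsetP hTL).
have hTS : T \subset S.
  by apply: subset_trans hTL _; rewrite -setD_eq0 hN.
have hv := vmon hTS.
have : ((v T - v S) / INR #|T| <= 0)%R.
  apply: (Rmult_le_reg_r (INR #|T|)); first rlra. field_simplify; rlra.
rlra.
Qed.

Lemma iter_bound (L T : {set 'I_n}) i : T \subset L -> (0 < #|T|)%N ->
  ((1 - (1 - 1 / INR #|T|) ^ i) * v T <= v (iter i (greedy_step v rk L) set0))%R.
Proof.
move=> hTL ht.
have Ht : (1 <= INR #|T|)%R by apply: (le_INR 1); apply/leP.
set u := (1 / INR #|T|)%R.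
have hu0 : (0 < u <= 1)%R.
  rewrite /u; split; first by apply: Rdiv_lt_0_compat; lra.
  apply: (Rmult_le_reg_r (INR #|T|)); first lra. field_simplify; lra.
have hvT := vpos T.
elim: i => [|i IH].
  rewrite /= Rminus_diag Rmult_0_l; exact: vpos.
rewrite [iter _.+1 _ _]/=.
set S := iter i (greedy_step v rk L) set0 in IH *.
have h := step_bound S hTL ht.
have e : ((v T - v S) / INR #|T| = (v T - v S) * u)%R by rewrite /u; field; lra.
rewrite e in h.
have hc := pow_le (1 - u) i ltac:(lra).
set ci := ((1 - u) ^ i)%R in IH hc *.
have -> : ((1 - u) ^ i.+1 = (1 - u) * ci)%R by [].
have h3 : (0 <= (1 - u) * (v S - (1 - ci) * v T))%R by apply: Rmult_le_pos; lra.
nra.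
Qed.

Lemma card_iter (L : {set 'I_n}) i : (i <= #|L|)%N ->
  iter i (greedy_step v rk L) set0 \subset L /\ #|iter i (greedy_step v rk L) set0| = i.
Proof.
elim: i => [|i IH] hi; first by rewrite /= sub0set cards0.
have [IH1 IH2] := IH (ltnW hi).
rewrite [iter _.+1 _ _]/=.
set S := iter i (greedy_step v rk L) set0 in IH1 IH2 *.
rewrite /greedy_step; have := pick_spec L S; case: (greedy_pick v rk L S) => [x [hx _]|hN].
  move: hx; rewrite inE => /andP [hxS hxL].
  by rewrite subUset sub1set hxL IH1 cardsU1 hxS IH2.
exfalso; move/eqP: hN; rewrite setD_eq0 => hLS.
have := subset_leq_card hLS; rewrite IH2; move: hi; rewrite ltnNge => /negP; done.
Qed.

Lemma greedy_bound (k : nat) (L T : {set 'I_n}) : (1 <= k)%N -> T \subset L -> (#|T| <= k)%N ->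
  ((1 - INR #|T| / (exp 1 * INR k)) * v T <= v (greedy v rk k L))%R.
Proof.
move=> hk hTL hTk.
have Hk : (1 <= INR k)%R by apply: (le_INR 1); apply/leP.
have He : (0 < exp 1)%R by apply: exp_pos.
have hvT := vpos T.
have Htk : (INR #|T| <= INR k)%R by apply: le_INR; apply/leP.
have Ht0 : (0 <= INR #|T|)%R by apply: pos_INR.
have hq : (0 <= INR #|T| / (exp 1 * INR k))%R.
  apply: Rmult_le_pos => //; apply: Rlt_le; apply: Rinv_0_lt_compat; nra.
rewrite /greedy.
case: (leqP k #|L|) => hkL.
  case: (posnP #|T|) => ht.
    have -> : T = set0 by apply/eqP; rewrite -cards_eq0 ht.
    rewrite cards0 /= Rdiv_0_l Rminus_0_r Rmult_1_l; apply: vmon; exact: sub0set.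
  have h := iter_bound k hTL ht.
  have hp := pow_bound ht hk.
  have hp0 : (0 <= (1 - 1 / INR #|T|) ^ k)%R.
    apply: pow_le; have : (1 / INR #|T| <= 1)%R.
      have Ht : (1 <= INR #|T|)%R by apply: (le_INR 1); apply/leP.
      apply: (Rmult_le_reg_r (INR #|T|)); first lra. field_simplify; lra.
    lra.
  apply: Rle_trans h; apply: Rmult_le_compat_r => //; lra.
have [h1 h2] := card_iter (leqnn #|L|).
have -> : iter #|L| (greedy_step v rk L) set0 = L by apply/eqP; rewrite eqEcard h1 h2 leqnn.
have := vmon hTL.
have : (0 <= 1 - INR #|T| / (exp 1 * INR k) <= 1)%R.
  split; last lra.
  have : (INR #|T| / (exp 1 * INR k) <= 1)%R.
    apply: (Rmult_le_reg_r (exp 1 * INR k)); first nra.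
    field_simplify; try lra.
    have := exp_ineq1 1 ltac:(lra). nra.
  lra.
nra.
Qed.
End Greedy.

Section Count.
Variables (n l : nat).
Hypothesis hln : (l <= n)%N.
Local Notation P := {perm 'I_n}.

Lemma sum_ord_lt : \sum_(i : 'I_n) (i < l)%N = l.
Proof.
rewrite (eq_bigr (fun i : 'I_n => if (i < l)%N then 1 else 0)%N); last by move=> i _; case: (i < l)%N.
rewrite -big_mkcond /= (big_ord_narrow hln) big_const_ord.
by rewrite iter_addn_0 mul1n.
Qed.

Lemma ind_sum (a : 'I_n) : ((a < l)%N : nat) = \sum_(i : 'I_n | (i < l)%N) (a == i : nat).
Proof.
case: (ltnP a l) => h.
  rewrite (bigD1 a) //= eqxx big1 // => i /andP [_ hi]; by rewrite eq_sym (negbTE hi).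
rewrite big1 // => i hi; case: eqP => // e; by rewrite e leqNgt hi in h.
Qed.

Lemma Ni_eq (x i j : 'I_n) : \sum_(r : P) (r x == i : nat) = \sum_(r : P) (r x == j : nat).
Proof.
rewrite (reindex_inj (mulIg (tperm i j))) /=.
apply: eq_bigr => r _; rewrite permM.
by rewrite -[X in _ == X](tpermR i j) (inj_eq (@perm_inj _ _)).
Qed.

Lemma N_lin (x : 'I_n) m : (m <= n)%N ->
  \sum_(r : P) ((r x < m)%N : nat) = m * \sum_(r : P) (r x == x : nat).
Proof.
move=> hm.
rewrite (eq_bigr (fun r : P => \sum_(i : 'I_n | (i < m)%N) (r x == i : nat))); last first.
  move=> r _; case: (ltnP (r x) m) => h.
    rewrite (bigD1 (r x)) //= eqxx big1 // => i /andP [_ hi]; by rewrite eq_sym (negbTE hi).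
  rewrite big1 // => i hi; case: eqP => // e; by rewrite e leqNgt hi in h.
rewrite exchange_big /=.
rewrite (eq_bigr (fun i => \sum_(r : P) (r x == x : nat))); last by move=> i _; apply: Ni_eq.
rewrite (big_ord_narrow hm) big_const_ord.
by rewrite iter_addn_0 mulnC.
Qed.

Lemma countN (x : 'I_n) :
  n * \sum_(r : P) ((r x < l)%N : nat) = l * #|P|.
Proof.
have e1 := N_lin x hln.
have e2 := N_lin x (leqnn n).
have e3 : \sum_(r : P) ((r x < n)%N : nat) = #|P|.
  rewrite (eq_bigr (fun _ => 1)) //; last by move=> r _; rewrite ltn_ord.
  by rewrite sum1_card.
by rewrite e1 -e3 e2 mulnCA.
Qed.

Lemma Mi_eq (x y y' : 'I_n) : y != x -> y' != x ->
  \sum_(r : P) ((r x < l)%N * (r y < l)%N) = \sum_(r : P) ((r x < l)%N * (r y' < l)%N).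
Proof.
move=> hy hy'.
rewrite (reindex_inj (mulgI (tperm y y'))) /=.
apply: eq_bigr => r _; rewrite !permM tpermL tpermD //; by rewrite eq_sym.
Qed.

Lemma countM (x y : 'I_n) : y != x ->
  (n.-1) * \sum_(r : P) ((r x < l)%N * (r y < l)%N) = l.-1 * \sum_(r : P) ((r x < l)%N : nat).
Proof.
move=> hy.
have e1 : \sum_(z | z != x) \sum_(r : P) ((r x < l)%N * (r z < l)%N) =
          n.-1 * \sum_(r : P) ((r x < l)%N * (r y < l)%N).
  rewrite (eq_bigr (fun _ => \sum_(r : P) ((r x < l)%N * (r y < l)%N))); last first.
    by move=> z hz; apply: Mi_eq.
  rewrite (eq_bigl (predC1 x)) // sum_nat_const cardC1 card_ord //.
rewrite -e1 exchange_big /= [in RHS]mulnC big_distrl /=.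
apply: eq_bigr => r _.
rewrite -big_distrr /=.
case hx: (r x < l)%N; rewrite ?mul0n ?mul1n //.
have H : \sum_z ((r z < l)%N : nat) = l.
  rewrite (reindex_inj (@perm_inj _ r^-1)) /=.
  rewrite (eq_bigr (fun i : 'I_n => ((i < l)%N : nat))); last by move=> i _; rewrite permKV.
  exact: sum_ord_lt.
rewrite (bigD1 x) //= hx add1n in H.
by rewrite -[in RHS]H.
Qed.
End Count.

Section Main.
Variables (n k : nat) (v : {set 'I_n} -> R) (rk : 'I_n -> nat) (OPT : {set 'I_n}) (l : nat).
Hypotheses (hk : (1 <= k)%nat) (vpos : nonneg_fun v) (vmon : monotone_fun v)
  (vsub : submodular_fun v) (hOk : (#|OPT| <= k)%nat) (hl1 : (1 <= l)%nat) (hln : (l <= n)%nat).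

Definition Lr (r : {perm 'I_n}) := [set y | (r y < l)%nat].
Definition tt (r : {perm 'I_n}) := #|OPT :&: Lr r|.
Definition cc (r : {perm 'I_n}) : R := (1 - INR (tt r) / (exp 1 * INR k))%R.
Definition alp : R := ((1 - INR l / (exp 1 * INR n) - 1 / (exp 1 * INR k)) * (INR l / INR n))%R.

Lemma card_tt r : tt r = \sum_(y in OPT) ((r y < l)%nat : nat).
Proof.
rewrite /tt -sum1_card.
rewrite (eq_bigl (fun y => (y \in OPT) && (y \in Lr r))); last by move=> y; rewrite inE.
rewrite big_mkcondr; apply: eq_bigr => y _; rewrite inE; by case: (r y < l)%nat.
Qed.

Lemma tt_le r : (tt r <= k)%nat.
Proof. apply: leq_trans hOk; apply: subset_leq_card; exact: subsetIl. Qed.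

Lemma He : (2 < exp 1)%R.
Proof. have := exp_ineq1 1 ltac:(lra); lra. Qed.

Lemma HK : (1 <= INR k)%R.
Proof. by apply: (le_INR 1); apply/leP. Qed.

Lemma HL : (1 <= INR l <= INR n)%R.
Proof. split; [apply: (le_INR 1)|apply: le_INR]; by apply/leP. Qed.

Lemma cc_ge r : (alp <= cc r /\ 0 <= cc r)%R.
Proof.
have he := He; have hK := HK; have [hL hN] := HL.
have ht : (INR (tt r) <= INR k)%R by apply: le_INR; apply/leP; apply: tt_le.
have ht0 := pos_INR (tt r).
have h1 : (INR (tt r) / (exp 1 * INR k) <= 1 / exp 1)%R.
  apply: (Rmult_le_reg_r (exp 1 * INR k)); first nra.
  field_simplify; nra.
have h2 : (0 < 1 / exp 1 < 1 / 2)%R.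
  split; first by apply: Rdiv_lt_0_compat; lra.
  apply: (Rmult_lt_reg_r (2 * exp 1)); first lra. field_simplify; lra.
rewrite /cc /alp; split; last by lra.
set p := (INR l / INR n)%R.
have hp : (0 < p <= 1)%R.
  rewrite /p; split; first by apply: Rdiv_lt_0_compat; lra.
  apply: (Rmult_le_reg_r (INR n)); first lra. field_simplify; lra.
have e1 : (INR l / (exp 1 * INR n) = p * (1 / exp 1))%R by rewrite /p; field; lra.
have e2 : (0 <= 1 / (exp 1 * INR k))%R.
  apply: Rlt_le; apply: Rdiv_lt_0_compat; nra.
rewrite e1.
set u := (1 / exp 1)%R in h1 h2 *.
set w := (1 / (exp 1 * INR k))%R in e2 *.
have h3 : (0 <= (1 - p) * (1 - u * (1 + p)))%R by apply: Rmult_le_pos; nra.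
have h4 : (0 <= w * p)%R by nra.
nra.
Qed.

Lemma prefix_Lr (pi : {perm 'I_n}) : prefix_set pi l = Lr (pi^-1)%g.
Proof.
apply/setP => y; rewrite /Lr /prefix_set inE.
apply/imsetP/idP.
  by move=> [i]; rewrite inE => hi ->; rewrite permK.
move=> h; exists ((pi^-1)%g y); first by rewrite inE.
by rewrite permKV.
Qed.

Lemma key (x : 'I_n) : x \in OPT ->
  (INR #|{perm 'I_n}| * alp <= \big[Rplus/0]_(r : {perm 'I_n}) (cc r * (if (r x < l)%nat then 1 else 0)))%R.
Proof.
move=> hx.
set N := \sum_(r : {perm 'I_n}) ((r x < l)%nat : nat).
set A := \sum_(y in OPT | y != x) \sum_(r : {perm 'I_n}) ((r x < l)%nat * (r y < l)%nat).
have S2 : \sum_(r : {perm 'I_n}) ((r x < l)%nat * tt r) = N + A.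
  rewrite (eq_bigr (fun r : {perm 'I_n} => \sum_(y in OPT) ((r x < l)%nat * (r y < l)%nat))); last first.
    by move=> r _; rewrite card_tt big_distrr.
  rewrite exchange_big /= (bigD1 x) //=; congr (_ + _).
  by apply: eq_bigr => r _; case: (r x < l)%nat.
have hA : (n * A <= k * (l * N))%nat.
  rewrite /A big_distrr /=.
  apply: (@leq_trans (\sum_(y in OPT | y != x) (l * N))).
    apply: leq_sum => y /andP [_ hy].
    have e := countM hln hy.
    have hn2 : (1 < n)%nat.
      case: (ltnP 1 n) => // hn; exfalso; move/eqP: hy; apply; apply/val_inj.
      move: (ltn_ord x) (ltn_ord y) hn; rewrite /=; lia.
    move: e; rewrite -/N; set M := \sum_(r : {perm 'I_n}) _ => e.
    have h1 : (n.-1 * (n * M) <= n.-1 * (l * N))%nat.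
      rewrite mulnCA e; move: hln hl1 hn2; nia.
    by rewrite leq_pmul2l in h1 => //; lia.
  apply: (@leq_trans (\sum_(y in OPT) (l * N))).
    by rewrite [X in (_ <= X)%nat](bigD1 x hx) /= leq_addl.
  by rewrite sum_nat_const leq_mul2r hOk orbT.
have he := He; have hK := HK; have [hL hNn] := HL.
have hP := countN hln x; rewrite -/N in hP.
have hPR : (INR n * INR N = INR l * INR #|{perm 'I_n}|)%R by rewrite -!mult_INR; congr INR; exact: hP.
have hAR : (INR n * INR A <= INR k * (INR l * INR N))%R.
  rewrite -!mult_INR; apply: le_INR; apply/leP; exact: hA.
have hA0 := pos_INR A.
have pt : forall r : {perm 'I_n}, (cc r * (if (r x < l)%nat then 1 else 0) =
    INR ((r x < l)%nat : nat) + (- (1 / (exp 1 * INR k))) * INR ((r x < l)%nat * tt r))%R.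
  move=> r; rewrite /cc; case: ifP => _ /=; rewrite ?mul1n ?mul0n /=; field; nra.
rewrite (eq_bigr _ (fun r _ => pt r)) RS_add RS_scal !RS_INR -/N S2 plus_INR.
have eP : (INR #|{perm 'I_n}| * (INR l / INR n) = INR N)%R.
  apply: (Rmult_eq_reg_r (INR n)); last lra.
  field_simplify; [rewrite Rmult_comm -hPR; lra | lra].
have eq1 : (INR #|{perm 'I_n}| * alp = (1 - INR l / (exp 1 * INR n) - 1 / (exp 1 * INR k)) * INR N)%R.
  by rewrite /alp -eP; ring.
rewrite eq1.
have key2 : (INR A / (exp 1 * INR k) <= INR l * INR N / (exp 1 * INR n))%R.
  have q0 : (0 <= 1 / (exp 1 * INR k * INR n))%R.
    apply: Rlt_le; apply: Rdiv_lt_0_compat; [lra|]; apply: Rmult_lt_0_compat; nra.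
  have e1 : (INR A / (exp 1 * INR k) = (INR n * INR A) * (1 / (exp 1 * INR k * INR n)))%R
    by field; split; nra.
  have e2 : (INR l * INR N / (exp 1 * INR n) = (INR k * (INR l * INR N)) * (1 / (exp 1 * INR k * INR n)))%R
    by field; split; nra.
  rewrite e1 e2; apply: Rmult_le_compat_r => //.
have e3 : (INR l / (exp 1 * INR n) * INR N = INR l * INR N / (exp 1 * INR n))%R by field; nra.
have e4 : (- (1 / (exp 1 * INR k)) * (INR N + INR A) = - (INR N / (exp 1 * INR k)) - INR A / (exp 1 * INR k))%R.
  by field; nra.
have e5 : (1 / (exp 1 * INR k) * INR N = INR N / (exp 1 * INR k))%R by field; nra.
rewrite e4; move: key2; rewrite -e3; move: e5.
set a1 := (INR l / (exp 1 * INR n))%R; set a2 := (1 / (exp 1 * INR k))%R.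
move=> e5 key2; rewrite Rmult_minus_distr_r Rmult_minus_distr_r Rmult_1_l e5; rlra.
Qed.
End Main.

Section Chain.
Variables (n k : nat) (v : {set 'I_n} -> R) (rk : 'I_n -> nat) (OPT : {set 'I_n}) (l : nat).
Hypotheses (hk : (1 <= k)%nat) (vpos : nonneg_fun v) (vmon : monotone_fun v)
  (vsub : submodular_fun v) (hOk : (#|OPT| <= k)%nat) (hl1 : (1 <= l)%nat) (hln : (l <= n)%nat).

Fixpoint lb (s : seq 'I_n) (Rs : {set 'I_n}) : R :=
  match s with
  | [::] => v set0
  | x :: s' => (lb s' Rs + (if x \in Rs then v (x |: [set y in s']) - v [set y in s'] else 0))%R
  end.

Lemma set_cons (x : 'I_n) s : [set y in x :: s] = x |: [set y in s].
Proof. by apply/setP => y; rewrite !inE. Qed.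

Lemma chain s Rs : (lb s Rs <= v ([set y in s] :&: Rs))%R.
Proof.
elim: s => [|x s IH] /=.
  by apply: vmon; apply: sub0set.
rewrite set_cons; set B := [set y in s] in IH *.
case hx: (x \in Rs); last first.
  have -> : (x |: B) :&: Rs = B :&: Rs.
    by apply/setP => y; rewrite !inE; case: (y =P x) => [->|_] /=; rewrite ?hx ?andbF.
  rlra.
have -> : (x |: B) :&: Rs = x |: (B :&: Rs).
  by apply/setP => y; rewrite !inE; case: (y =P x) => [->|_] //=; rewrite hx.
have hm : (v (B :&: Rs) <= v (x |: (B :&: Rs)))%R by apply: vmon; apply: subsetUr.
case hxB: (x \in s).
  have -> : x |: B = B by apply/setP => y; rewrite !inE; case: (y =P x) => [->|_] //=; rewrite hxB.
  rlra.
have := vsub (x |: (B :&: Rs)) B.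
have -> : (x |: (B :&: Rs)) :|: B = x |: B.
  by apply/setP => y; rewrite !inE; case: (y \in s); rewrite ?andbF ?orbF ?orbT.
have -> : (x |: (B :&: Rs)) :&: B = B :&: Rs.
  apply/setP => y; rewrite !inE; case: (y =P x) => [->|_] /=; first by rewrite hxB.
  by case: (y \in s); case: (y \in Rs).
rlra.
Qed.

Lemma RS_const c : (\big[Rplus/0]_(r : {perm 'I_n}) c = INR #|{perm 'I_n}| * c)%R.
Proof.
rewrite (eq_bigr (fun _ => c * INR 1)%R); last by move=> r _ /=; lra.
rewrite RS_scal RS_INR sum1_card Rmult_comm; apply: (f_equal (fun z => (INR z * c)%R)); by apply: eq_card.
Qed.

Lemma sum_lb s : all (fun y => y \in OPT) s ->
  (INR #|{perm 'I_n}| * alp n k l * v [set y in s] <=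
   \big[Rplus/0]_(r : {perm 'I_n}) (cc k OPT l r * lb s (Lr l r)))%R.
Proof.
elim: s => [|x s IH] /=.
  move=> _.
  have -> : [set y in [::]] = (set0 : {set 'I_n}) by apply/setP => y; rewrite !inE.
  rewrite Rmult_assoc -RS_const; apply: RS_le => r _.
  have [h1 h2] := cc_ge hk hOk hl1 hln r.
  have := vpos set0; nra.
move=> /andP [hx hs].
have IH' := IH hs.
set B := [set y in s] in IH' *.
set D := (v (x |: B) - v B)%R.
have hD : (0 <= D)%R by rewrite /D; have := vmon (subsetUr [set x] B); lra.
have hk' := key hk hOk hl1 hln hx.
have e : forall r : {perm 'I_n}, (cc k OPT l r * (lb s (Lr l r) + (if x \in Lr l r then D else 0)) =
   cc k OPT l r * lb s (Lr l r) + D * (cc k OPT l r * (if (r x < l)%nat then 1 else 0)))%R.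
  by move=> r; rewrite /Lr inE; case: ifP => _; ring.
rewrite (eq_bigr _ (fun r _ => e r)) RS_add RS_scal set_cons.
have : (v (x |: B) = v B + D)%R by rewrite /D; ring.
move=> ->.
have := Rmult_le_compat_l D _ _ hD hk'.
move: IH'; set Q := (INR #|{perm 'I_n}| * alp n k l)%R.
set S1 := (\big[Rplus/0]_(r : {perm 'I_n}) (cc k OPT l r * lb s (Lr l r)))%R.
set S2 := (\big[Rplus/0]_(r : {perm 'I_n}) (cc k OPT l r * (if (r x < l)%nat then 1 else 0)))%R.
move=> h1 h2; rewrite Rmult_plus_distr_l; nra.
Qed.
End Chain.

Theorem mainTheorem5 (n k : nat) (v : {set 'I_n} -> R) (rk : 'I_n -> nat)
  (OPT : {set 'I_n}) (l : nat) :
  (1 <= k)%N ->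
  nonneg_fun v -> monotone_fun v -> submodular_fun v ->
  injective rk ->
  (#|OPT| <= k)%N ->
  (forall S : {set 'I_n}, (#|S| <= k)%N -> (v S <= v OPT)%R) ->
  (1 <= l <= n)%N ->
  (expect_perm (fun pi => v (greedy v rk k (prefix_set pi l)))
   >= (1 - INR l / (exp 1 * INR n) - 1 / (exp 1 * INR k))
      * (INR l / INR n) * v OPT)%R.
Proof.
move=> hk vpos vmon vsub _ hOk _ /andP [hl1 hln].
rewrite /expect_perm.
rewrite (eq_bigr (fun pi => v (greedy v rk k (Lr l (pi^-1)%g)))); last by move=> pi _; rewrite prefix_Lr.
rewrite (reindex_inj (@invg_inj _)) /=.
rewrite (eq_bigr (fun r => v (greedy v rk k (Lr l r)))); last by move=> r _; rewrite invgK.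
have hP : (0 < INR #|{perm 'I_n}|)%R.
  apply: (lt_INR 0); apply/ltP; apply/card_gt0P; by exists 1%g.
have h1 : (\big[Rplus/0]_(r : {perm 'I_n}) (cc k OPT l r * lb v (enum OPT) (Lr l r)) <=
           \big[Rplus/0]_(r : {perm 'I_n}) v (greedy v rk k (Lr l r)))%R.
  apply: RS_le => r _.
  have [_ hc] := cc_ge hk hOk hl1 hln r.
  have hch := chain vmon vsub (enum OPT) (Lr l r); rewrite set_enum in hch.
  have hg := greedy_bound rk vpos vmon vsub hk (subsetIr OPT (Lr l r)) (tt_le l hOk r).
  apply: Rle_trans hg; rewrite -/(tt OPT l r) -/(cc k OPT l r).
  by apply: Rmult_le_compat_l.
have hall : all (fun y => y \in OPT) (enum OPT) by apply/allP => y; rewrite mem_enum.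
have h2 := sum_lb hk vpos vmon hOk hl1 hln hall.
rewrite set_enum in h2.
apply/Rle_ge.
apply: (Rmult_le_reg_r (INR #|{perm 'I_n}|)) => //.
have eS : forall S0, (S0 / INR #|{perm 'I_n}| * INR #|{perm 'I_n}| = S0)%R by move=> S0; field; lra.
rewrite eS.
move: h1 h2; rewrite /alp; set S := (\big[Rplus/0]_(r : {perm 'I_n}) v _)%R => h1 h2.
rlra.
Qed.
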